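(* Let $\varepsilon>0$ and let $N=O\!\left(\frac{|\Omega|^{|\Omega|^2}}{\varepsilon^{|\Omega|^2+|\Omega|}}\right)$. Given access to a best response oracle, one can compute, for each type $\theta\in\Theta$, a set of actions $A_\theta\subseteq A$ using $N$ queries to the oracle per type, such that there exists an IC and IR menu $\mathcal{M}=\{(E(\theta),t(\theta))\}_{\theta\in\Theta}$ in which every experiment uses at most $N$ signals, every type $\theta$, upon receiving any signal of its experiment $E(\theta)$, has an optimal action (one maximizing its posterior expected utility) in $A_\theta$, and $\mathrm{Rev}(\mathcal{M})\ge\mathrm{OPT}-O(\sqrt{\varepsilon})$. (The constants hidden in $O(\cdot)$ are absolute.)
   Context: Single-buyer information-selling model. $\Omega$ is a finite set of states, $A$ a finite (possibly exponentially large) set of actions, and $u_{\omega,a}\in[0,1]$ the buyer's ex-post utility. A type is $\theta\in\Delta(\Omega)$; $\Theta\subseteq\Delta(\Omega)$ is a finite type space with distribution $F$. An experiment $E$ with finite signal set $S$ is a matrix $\pi(E)=(\pi_{\omega,s}(E))_{\omega\in\Omega,s\in S}$ with nonnegative entries and $\sum_s\pi_{\omega,s}(E)=1$ for every $\omega$. The value of $E$ to type $\theta$ is $V_\theta(E)=\sum_{s\in S}\max_{a\in A}\sum_\omega\theta_\omega\pi_{\omega,s}(E)u_{\omega,a}$, and the base utility is $u(\theta)=\max_{a}\sum_\omega\theta_\omega u_{\omega,a}$. A menu assigns to each type $\theta$ an experiment $E(\theta)$ and a price $t(\theta)$; it is IC if $V_\theta(E(\theta))-t(\theta)\ge V_\theta(E(\theta'))-t(\theta')$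 for all $\theta,\theta'$, and IR if $V_\theta(E(\theta))-t(\theta)\ge u(\theta)$ for all $\theta$. Its revenue is $\mathrm{Rev}=\sum_\theta F(\theta)t(\theta)$; $\mathrm{OPT}$ is the maximum revenue over IC and IR menus. A best response (BR) oracle takes a distribution $q\in\Delta(\Omega)$ and returns an action $a\in\arg\max_{a\in A}\sum_\omega q_\omega u_{\omega,a}$. *)

(* Defs.v *)
From HB Require Import structures.
From mathcomp Require Import all_boot all_order all_algebra.
From mathcomp Require Import reals.
Set Implicit Arguments. Unset Strict Implicit. Unset Printing Implicit Defensive.
Import Order.TTheory GRing.Theory Num.Theory.
Local Open Scope ring_scope.

Section InfoSelling.
Variable R : realType.

Definition is_distr (T : finType) (q : T -> R) : Prop :=
  (forall x, 0 <= q x) /\ \sum_(x : T) q x = 1.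

Definition is_experiment (Omega S : finType) (pi : Omega -> S -> R) : Prop :=
  (forall w s, 0 <= pi w s) /\ (forall w, \sum_(s : S) pi w s = 1).

(* Maximum over a finite set of nonnegative reals (all quantities maximized
   below are nonnegative under the standing assumptions u in [0,1],
   theta >= 0, pi >= 0, so the neutral element 0 is harmless). *)
Definition fmax (T : finType) (f : T -> R) : R := \big[Num.max/0]_(x : T) f x.

Definition value (Omega A S : finType) (u : Omega -> A -> R)
    (theta : Omega -> R) (pi : Omega -> S -> R) : R :=
  \sum_(s : S) fmax (fun a : A => \sum_(w : Omega) theta w * pi w s * u w a).

Definition base_util (Omega A : finType) (u : Omega -> A -> R)
    (theta : Omega -> R) : R :=
  fmax (fun a : A => \sum_(w : Omega) theta w * u w a).

Definition sig_prob (Omega S : finType) (theta : Omega -> R)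
    (pi : Omega -> S -> R) (s : S) : R :=
  \sum_(w : Omega) theta w * pi w s.

(* posterior belief after signal s (meaningful when sig_prob > 0) *)
Definition posterior (Omega S : finType) (theta : Omega -> R)
    (pi : Omega -> S -> R) (s : S) (w : Omega) : R :=
  theta w * pi w s / sig_prob theta pi s.

(* A menu, indexed by the type space I (types theta i, i : I), with
   experiment E i over signal set S i and price t i. *)
Definition menu_IC (Omega A I : finType) (u : Omega -> A -> R)
    (theta : I -> Omega -> R) (S : I -> finType)
    (E : forall i, Omega -> S i -> R) (t : I -> R) : Prop :=
  forall i j, value u (theta i) (E j) - t j <= value u (theta i) (E i) - t i.

Definition menu_IR (Omega A I : finType) (u : Omega -> A -> R)
    (theta : I -> Omega -> R) (S : I -> finType)
    (E : forall i, Omega -> S i -> R) (t : I -> R) : Prop :=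
  forall i, base_util u (theta i) <= value u (theta i) (E i) - t i.

Definition revenue (I : finType) (F : I -> R) (t : I -> R) : R :=
  \sum_(i : I) F i * t i.

Definition is_BR_oracle (Omega A : finType) (u : Omega -> A -> R)
    (br : (Omega -> R) -> A) : Prop :=
  forall q : Omega -> R, is_distr q ->
    forall a : A, \sum_(w : Omega) q w * u w a <= \sum_(w : Omega) q w * u w (br q).

End InfoSelling.

(* An (adaptive) oracle query strategy: given the list of oracle answers
   received so far (actions, only comparable for equality), the next query.
   [run_queries q br n] is the list of the n answers obtained. *)
Fixpoint run_queries (X : Type) (T : eqType) (q : seq T -> X) (br : X -> T)
    (n : nat) : seq T :=
  match n with
  | 0 => [::]
  | n'.+1 => let h := run_queries q br n' in rcons h (br (q h))
  end.

(* Main.v *)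
Require Import Defs.
From HB Require Import structures.
From mathcomp Require Import all_boot all_order all_algebra.
From mathcomp Require Import reals classical_sets.
Import Order.TTheory GRing.Theory Num.Theory.
Local Open Scope ring_scope.
From mathcomp Require Import ring lra.
Set Implicit Arguments. Unset Strict Implicit.

Section Fmax.
Variable R : realType.

Lemma fmax_ge0 (T : finType) (f : T -> R) : 0 <= fmax f.
Proof. rewrite /fmax; elim/big_rec: _ => //= i x _ hx; by rewrite le_max hx orbT. Qed.

Lemma fmax_ge (T : finType) (f : T -> R) x : f x <= fmax f.
Proof. rewrite /fmax (bigD1 x) //= le_max lexx //. Qed.

Lemma fmax_le (T : finType) (f : T -> R) b : 0 <= b -> (forall x, f x <= b) -> fmax f <= b.
Proof. move=> b0 hb; rewrite /fmax; elim/big_rec: _ => //= i x _ hx; by rewrite ge_max hx hb. Qed.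

Lemma fmax_mono (T : finType) (f g : T -> R) : (forall x, f x <= g x) -> fmax f <= fmax g.
Proof. move=> h; apply: fmax_le; first exact: fmax_ge0. move=> x; exact: le_trans (h x) (fmax_ge _ _). Qed.

Lemma fmax_scale (T : finType) (f : T -> R) c : 0 <= c -> fmax (fun x => c * f x) = c * fmax f.
Proof.
move=> c0; apply/eqP; rewrite eq_le; apply/andP; split.
  apply: fmax_le; first by rewrite mulr_ge0 // fmax_ge0.
  by move=> x; rewrite ler_wpM2l // fmax_ge.
case: (eqVneq c 0) => [->|cn0]; first by rewrite mul0r fmax_ge0.
have cp : 0 < c by rewrite lt_def cn0.
rewrite -ler_pdivlMl //; apply: fmax_le; first by rewrite mulr_ge0 ?invr_ge0 ?fmax_ge0 // ltW.
move=> x; rewrite ler_pdivlMl //; exact: (fmax_ge (fun x => c * f x)).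
Qed.

Lemma fmax_add (T : finType) (f g : T -> R) : fmax (fun x => f x + g x) <= fmax f + fmax g.
Proof. apply: fmax_le; first by rewrite addr_ge0 ?fmax_ge0. by move=> x; rewrite lerD ?fmax_ge. Qed.

Lemma fmax_sum (T J : finType) (f : J -> T -> R) :
  fmax (fun x => \sum_(j : J) f j x) <= \sum_(j : J) fmax (f j).
Proof.
apply: fmax_le; first by apply: sumr_ge0 => j _; exact: fmax_ge0.
by move=> x; apply: ler_sum => j _; exact: fmax_ge.
Qed.

Lemma fmax_const0 (T : finType) : fmax (fun _ : T => (0:R)) = 0.
Proof. apply/eqP; rewrite eq_le fmax_ge0 andbT; apply: fmax_le => //. Qed.
End Fmax.

Section Grid.
Variable R : realType.
Variable Omega : finType.
Variable m : nat.
Definition G := {ffun Omega -> 'I_m.+1}.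
Definition gv (g : G) (w : Omega) : R := (g w)%:R / m%:R.
Definition NG := #|G|.
Definition gexp (c : G -> R) : Omega -> 'I_NG -> R :=
  fun w s => c (enum_val s) * gv (enum_val s) w.

Lemma sum_NG (h : G -> R) : \sum_(s : 'I_NG) h (enum_val s) = \sum_(g : G) h g.
Proof. by rewrite (big_enum_val h). Qed.

Lemma merge_sum (K : finType) (dir : K -> G) (coef : K -> R) (H : G -> R) :
  \sum_(g : G) (\sum_(k : K) (dir k == g)%:R * coef k) * H g
  = \sum_(k : K) coef k * H (dir k).
Proof.
under eq_bigr do rewrite mulr_suml.
rewrite exchange_big /=; apply: eq_bigr => k _.
rewrite (bigD1 (dir k)) //= eqxx mul1r big1 ?addr0 // => g /negbTE.
by rewrite eq_sym => ->; rewrite !mul0r.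
Qed.
End Grid.
Arguments gv {R Omega m}.
Arguments gexp {R Omega m}.


Section Phi.
Variable R : realType.
Variables (Omega A : finType) (u : Omega -> A -> R) (th : Omega -> R).
Hypothesis u01 : forall w a, 0 <= u w a <= 1.
Hypothesis th0 : forall w, 0 <= th w.

Definition Phi (x : Omega -> R) := fmax (fun a : A => \sum_w th w * x w * u w a).

Lemma Phi_ext x y : (forall w, x w = y w) -> Phi x = Phi y.
Proof. by move=> h; rewrite /Phi /fmax; apply: eq_bigr => a _; apply: eq_bigr => w _; rewrite h. Qed.

Lemma Phi_scale c x : 0 <= c -> Phi (fun w => c * x w) = c * Phi x.
Proof.
move=> c0; rewrite /Phi -fmax_scale //; rewrite /fmax; apply: eq_bigr => a _.
by rewrite mulr_sumr; apply: eq_bigr => w _; rewrite !mulrA (mulrC (th w)).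
Qed.

Lemma Phi_add x y : Phi (fun w => x w + y w) <= Phi x + Phi y.
Proof.
rewrite /Phi; apply: le_trans (fmax_add _ _); apply: fmax_mono => a.
by rewrite -big_split /=; apply: ler_sum => w _; rewrite mulrDr mulrDl.
Qed.

Lemma Phi_sum (J : finType) (x : J -> Omega -> R) :
  Phi (fun w => \sum_j x j w) <= \sum_j Phi (x j).
Proof.
rewrite /Phi; apply: le_trans (fmax_sum (fun j a => \sum_w th w * x j w * u w a)).
apply: fmax_mono => a; rewrite exchange_big /=; apply: ler_sum => w _.
by rewrite mulr_sumr mulr_suml.
Qed.

Lemma Phi_mono x y : (forall w, 0 <= x w <= y w) -> Phi x <= Phi y.
Proof.
move=> h; apply: fmax_mono => a; apply: ler_sum => w _.
have /andP[x0 xy] := h w; have /andP[u0 _] := u01 w a.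
by rewrite ler_wpM2r // ler_wpM2l.
Qed.

Lemma Phi_le x : (forall w, 0 <= x w) -> Phi x <= \sum_w th w * x w.
Proof.
move=> h; apply: fmax_le; first by apply: sumr_ge0 => w _; rewrite mulr_ge0.
move=> a; apply: ler_sum => w _; have /andP[_ u1] := u01 w a.
by rewrite ler_piMr // mulr_ge0.
Qed.

Lemma Phi_ge0 x : 0 <= Phi x.
Proof. exact: fmax_ge0. Qed.
End Phi.

Section Constr.
Variable R : realType.
Variables (Omega S : finType) (m : nat) (pi : Omega -> S -> R).
Hypothesis m0 : (0 < m)%N.
Hypothesis pi0 : forall w s, 0 <= pi w s.

Definition MM s : R := fmax (fun w => pi w s).
Definition dd s : G Omega m := [ffun w => inord (Num.truncn (m%:R * (pi w s / MM s)))].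
Definition ee w' : G Omega m := [ffun w => if w == w' then ord_max else ord0].
Definition rr s w : R := pi w s - MM s * gv (dd s) w.

Lemma MM_ge0 s : 0 <= MM s. Proof. exact: fmax_ge0. Qed.
Lemma pi_le_MM w s : pi w s <= MM s. Proof. exact: (fmax_ge (fun w => pi w s)). Qed.

Lemma gv_ee w' w : gv (ee w') w = (w == w')%:R :> R.
Proof.
rewrite /gv ffunE; case: eqP => _ /=; last by rewrite mul0r.
by rewrite divff // pnatr_eq0 -lt0n.
Qed.

Lemma gv_ge0 (g : G Omega m) w : 0 <= gv g w :> R.
Proof. by rewrite /gv divr_ge0. Qed.

Lemma dd_facts s w : 0 <= MM s * gv (dd s) w <= pi w s /\ 0 <= rr s w <= MM s / m%:R.
Proof.
have mp : 0 < m%:R :> R by rewrite ltr0n.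
have hM := MM_ge0 s; have hp := pi0 w s; have hpM := pi_le_MM w s.
case: (eqVneq (MM s) 0) => [M0|Mn0].
  have p0 : pi w s = 0 by apply/eqP; rewrite eq_le hp andbT -M0.
  by rewrite /rr M0 p0 !mul0r subr0 lexx.
have Mp : 0 < MM s by rewrite lt_def Mn0.
set x := pi w s / MM s.
have x0 : 0 <= x by rewrite divr_ge0.
have x1 : x <= 1 by rewrite ler_pdivrMr // mul1r.
have /andP[t1 t2] := truncn_itv (mulr_ge0 (ltW mp) x0).
set t := Num.truncn _ in t1 t2.
have tm : (t <= m)%N.
  by rewrite -(ler_nat R); apply: le_trans t1 _; rewrite ler_piMr // ltW.
have gvE : gv (dd s) w = t%:R / m%:R.
  by rewrite /gv ffunE inordK // ltnS.
have pE : pi w s = MM s * x by rewrite /x mulrC divfK.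
have h1 : t%:R / m%:R <= x by rewrite ler_pdivrMr // mulrC.
have h2 : x <= t%:R / m%:R + 1 / m%:R.
  by rewrite -mulrDl ler_pdivlMr // mulrC natr1 ltW.
have h0 : 0 <= t%:R / m%:R :> R by rewrite divr_ge0.
rewrite /rr gvE pE; split.
  by rewrite mulr_ge0 //= ler_wpM2l.
rewrite -mulrBr mulr_ge0 ?subr_ge0 //= -[X in _ <= X]mulr1 -mulrA ler_wpM2l //.
rewrite mulr1; move: h2; rewrite div1r; lra.
Qed.

Lemma rr_ge0 s w : 0 <= rr s w.
Proof. by case: (dd_facts s w) => _ /andP[]. Qed.
Lemma rr_le s w : rr s w <= MM s / m%:R.
Proof. by case: (dd_facts s w) => _ /andP[]. Qed.
Lemma MMgv s w : 0 <= MM s * gv (dd s) w <= pi w s.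
Proof. by case: (dd_facts s w). Qed.

Definition cc (g : G Omega m) : R :=
  \sum_s (dd s == g)%:R * MM s + \sum_(p : S * Omega) (ee p.2 == g)%:R * rr p.1 p.2.

Lemma cc_sum (H : G Omega m -> R) :
  \sum_g cc g * H g = \sum_s MM s * H (dd s) + \sum_(p : S * Omega) rr p.1 p.2 * H (ee p.2).
Proof.
rewrite /cc; under eq_bigr do rewrite mulrDl; rewrite big_split /=.
by rewrite (merge_sum dd MM H) (merge_sum (fun p : S * Omega => ee p.2) (fun p => rr p.1 p.2) H).
Qed.

Lemma cc_ge0 g : 0 <= cc g.
Proof.
rewrite /cc addr_ge0 //.
  by apply: sumr_ge0 => s _; rewrite mulr_ge0 // MM_ge0.
apply: sumr_ge0 => p _; rewrite mulr_ge0 //.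
by case: (dd_facts p.1 p.2) => _ /andP[].
Qed.

Lemma cc_row w : \sum_g cc g * gv g w = \sum_s pi w s.
Proof.
rewrite cc_sum -(pair_big xpredT xpredT (fun s w' => rr s w' * gv (ee w') w)) /=.
rewrite -big_split /=; apply: eq_bigr => s _.
rewrite (bigD1 w) //= big1 => [|w' /negbTE hw]; last by rewrite gv_ee eq_sym hw mulr0.
by rewrite gv_ee eqxx mulr1 addr0 /rr addrC subrK.
Qed.
End Constr.
Arguments cc {R Omega S} m pi g.
Arguments rr {R Omega S} m pi s w.
Arguments MM {R Omega S} pi s.
Arguments dd {R Omega S} m pi s.
Arguments ee {Omega} m w'.

Section Val.
Variable R : realType.
Variables (Omega A : finType) (u : Omega -> A -> R) (m : nat).
Hypothesis u01 : forall w a, 0 <= u w a <= 1.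
Hypothesis m0 : (0 < m)%N.

Lemma value_gexp (c : G Omega m -> R) th : (forall g, 0 <= c g) ->
  value u th (gexp c) = \sum_g c g * Phi u th (gv g).
Proof.
move=> c0; rewrite -sum_NG /value; apply: eq_bigr => s _.
rewrite -Phi_scale //; apply: Phi_ext => w; by [].
Qed.

Lemma is_exp_gexp (c : G Omega m -> R) : (forall g, 0 <= c g) ->
  (forall w, \sum_g c g * gv g w = 1) -> is_experiment (gexp c).
Proof.
move=> c0 h; split => [w s|w]; first by rewrite /gexp mulr_ge0 // gv_ge0.
by rewrite -(h w) -sum_NG.
Qed.

Variables (S : finType) (pi : Omega -> S -> R) (th : Omega -> R).
Hypothesis piE : is_experiment pi.
Hypothesis thD : is_distr th.

Lemma cc_is_exp : is_experiment (gexp (cc m pi)).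
Proof.
case: piE => p0 p1; apply: is_exp_gexp => [g|w]; first exact: cc_ge0.
by rewrite cc_row.
Qed.

Lemma cc_value_ge : value u th pi <= \sum_g cc m pi g * Phi u th (gv g).
Proof.
case: piE => p0 p1; case: thD => t0 t1.
rewrite cc_sum // -(pair_big xpredT xpredT (fun s w' => rr m pi s w' * Phi u th (gv (ee m w')))) /=.
rewrite -big_split /=; apply: ler_sum => s _.
rewrite -Phi_scale ?MM_ge0 //.
under eq_bigr do rewrite -Phi_scale ?rr_ge0 //.
apply: le_trans (lerD (lexx _) (Phi_sum u th _)).
apply: le_trans (Phi_add u th _ _).
rewrite le_eqVlt; apply/orP; left; apply/eqP; apply: Phi_ext => w.
rewrite (bigD1 w) //= big1 => [|w' /negbTE hw]; last by rewrite gv_ee // eq_sym hw mulr0.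
by rewrite gv_ee // eqxx mulr1 addr0 /rr addrC subrK.
Qed.

Lemma sumMM : \sum_s MM pi s <= #|Omega|%:R.
Proof.
case: piE => p0 p1.
apply: (@le_trans _ _ (\sum_s \sum_w pi w s)).
  apply: ler_sum => s _; apply: fmax_le; first by apply: sumr_ge0.
  by move=> w; rewrite (bigD1 w) //= lerDl sumr_ge0.
rewrite exchange_big /=; under eq_bigr do rewrite p1.
by rewrite sumr_const.
Qed.

Lemma cc_value_le : \sum_g cc m pi g * Phi u th (gv g) <= value u th pi + #|Omega|%:R / m%:R.
Proof.
case: piE => p0 p1; case: thD => t0 t1.
have mp : 0 < m%:R :> R by rewrite ltr0n.
rewrite cc_sum //; apply: lerD.
  apply: ler_sum => s _; rewrite -Phi_scale ?MM_ge0 //.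
  by apply: Phi_mono => // w; apply: MMgv.
apply: (@le_trans _ _ (\sum_(p : S * Omega) th p.2 * (MM pi p.1 / m%:R))).
  apply: ler_sum => p _; rewrite -Phi_scale ?rr_ge0 //.
  apply: le_trans (Phi_le u01 t0 _) _ => [w|]; first by rewrite mulr_ge0 ?rr_ge0 ?gv_ge0.
  rewrite (bigD1 p.2) //= big1 => [|w' /negbTE hw]; last by rewrite gv_ee // hw !mulr0.
  by rewrite gv_ee // eqxx mulr1 addr0 ler_wpM2l // rr_le.
rewrite -(pair_big xpredT xpredT (fun s w => th w * (MM pi s / m%:R))) /=.
under eq_bigr do rewrite -mulr_suml t1 mul1r.
by rewrite -mulr_suml ler_wpM2r ?invr_ge0 ?ler0n // sumMM.
Qed.
End Val.

Lemma rq_size (X : Type) (T : eqType) (q : seq T -> X) br n : size (run_queries q br n) = n.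
Proof. by elim: n => //= n IH; rewrite size_rcons IH. Qed.

Lemma rq_mem (X : Type) (T : eqType) (q : seq T -> X) br (f : nat -> X) n k :
  (forall h, q h = f (size h)) -> (k < n)%N -> br (f k) \in run_queries q br n.
Proof.
move=> hq; elim: n => // n IH; rewrite ltnS leq_eqVlt => /orP[/eqP->|lt] /=.
  by rewrite mem_rcons inE hq rq_size eqxx.
by rewrite mem_rcons inE IH // orbT.
Qed.

Lemma nat_bound n : (0 < n)%N -> ((3 * n) ^ n <= 3 * n ^ (n ^ 2))%N.
Proof.
case: n => // n _; case: n => // n; case: n => // n.
set k := n.+3.
have h1 : (3 * k <= k * k)%N by rewrite leq_mul2r.
apply: (@leq_trans ((k * k) ^ k)); first by rewrite leq_exp2r.
rewrite expnMn -expnD; apply: (@leq_trans (k ^ (k ^ 2))); last by rewrite leq_pmull.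
rewrite leq_pexp2l // addnn -mul2n expnS expn1 leq_mul2r; apply/orP; right; by [].
Qed.

Definition mm (R : realType) (n : nat) (eps : R) := (Num.truncn (n%:R / eps)).+1.

Lemma mm_delta (R : realType) (n : nat) (eps : R) : 0 < eps -> n%:R / (mm n eps)%:R <= eps.
Proof.
move=> e0; have h := truncnS_gt (n%:R / eps).
have mp : 0 < (mm n eps)%:R :> R by rewrite ltr0n.
rewrite ler_pdivrMr // mulrC -ler_pdivrMr //; exact: ltW.
Qed.

Lemma N_bound (R : realType) (n : nat) (eps : R) : 0 < eps -> eps <= 1 ->
  (((mm n eps).+1) ^ n)%:R <= 3%:R * (n ^ (n ^ 2))%:R / eps ^+ (n ^ 2 + n) :> R.
Proof.
move=> e0 e1.
case: n => [|k]; first by rewrite expn0 !expr0 divr1 mulr1 ler_nat.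
set n' := k.+1.
have epn : 0 < eps ^+ (n' ^ 2 + n') by rewrite exprn_gt0.
have x1 : 1 <= n'%:R / eps.
  by rewrite ler_pdivlMr // mul1r; apply: le_trans e1 _; rewrite ler1n.
have hm : (mm n' eps)%:R <= n'%:R / eps + 1.
  by rewrite /mm -natr1 lerD2r truncn_le divr_ge0 ?ler0n ?ltW.
have hm1 : ((mm n' eps).+1)%:R <= 3%:R * n'%:R / eps.
  rewrite -natr1 -mulrA; apply: le_trans (lerD hm (lexx 1)) _.
  lra.
rewrite natrX; apply: (@le_trans _ _ ((3%:R * n'%:R / eps) ^+ n')).
  by rewrite lerXn2r ?nnegrE ?ler0n // divr_ge0 ?mulr_ge0 ?ler0n ?ltW.
have H1 : ((3 * n') ^ n')%:R <= (3 * n' ^ (n' ^ 2))%:R :> R by rewrite ler_nat nat_bound.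
have ep1 : 0 < eps ^+ n' by rewrite exprn_gt0.
have H2 : (eps ^+ n')^-1 <= (eps ^+ (n' ^ 2 + n'))^-1.
  rewrite lef_pV2 ?posrE ?exprn_gt0 //; exact: (ler_wiXn2l (ltW e0) e1 (leq_addl _ _)).
rewrite expr_div_n -natrM -natrX.
apply: le_trans (ler_wpM2r _ H1) _; first by rewrite invr_ge0 ltW.
by rewrite natrM -!mulrA ler_wpM2l ?ler0n // ler_wpM2l ?ler0n.
Qed.

Section Helpers.
Variable R : realType.
Variables (Omega A : finType) (u : Omega -> A -> R).
Hypothesis u01 : forall w a, 0 <= u w a <= 1.

Lemma value_le1 (S : finType) (pi : Omega -> S -> R) th :
  is_experiment pi -> is_distr th -> value u th pi <= 1.
Proof.
case=> p0 p1 [t0 t1].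
apply: (@le_trans _ _ (\sum_s \sum_w th w * pi w s)).
  apply: ler_sum => s _; exact: (Phi_le u01 t0 (fun w => p0 w s)).
by rewrite exchange_big /=; under eq_bigr do rewrite -mulr_sumr p1 mulr1; rewrite t1.
Qed.

Lemma base_ge0 th : 0 <= base_util u th.
Proof. exact: fmax_ge0. Qed.

Variable m : nat.
Hypothesis m0 : (0 < m)%N.
Definition gone : G Omega m := [ffun _ => ord_max].
Definition c0 (g : G Omega m) : R := (g == gone)%:R.

Lemma gv_gone w : gv gone w = 1 :> R.
Proof. by rewrite /gv ffunE /= divff // pnatr_eq0 -lt0n. Qed.

Lemma c0_sum (H : G Omega m -> R) : \sum_g c0 g * H g = H gone.
Proof.
rewrite (bigD1 gone) //= /c0 eqxx mul1r big1 ?addr0 // => g /negbTE ->.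
by rewrite mul0r.
Qed.

Lemma c0_val th : \sum_g c0 g * Phi u th (gv g) = base_util u th.
Proof.
rewrite c0_sum /Phi /base_util /fmax; apply: eq_bigr => a _; apply: eq_bigr => w _.
by rewrite gv_gone mulr1.
Qed.

Definition query (th : Omega -> R) (g : G Omega m) : Omega -> R :=
  fun w => th w * gv g w / \sum_w' th w' * gv g w'.

Lemma own_signal (c : G Omega m -> R) th (s : 'I_(NG Omega m)) :
  (forall g, 0 <= c g) -> (forall w, 0 <= th w) ->
  0 < sig_prob th (gexp c) s ->
  is_distr (query th (enum_val s)) /\
  forall a, \sum_w posterior th (gexp c) s w * u w a
            = \sum_w query th (enum_val s) w * u w a.
Proof.
move=> c0' t0; set g := enum_val s; set D := \sum_w th w * gv g w.
have sE : sig_prob th (gexp c) s = c g * D.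
  by rewrite /sig_prob /D mulr_sumr; apply: eq_bigr => w _; rewrite /gexp -/g mulrCA.
have D0 : 0 <= D by apply: sumr_ge0 => w _; rewrite mulr_ge0 ?gv_ge0.
rewrite sE => hp.
have Dn0 : D != 0 by apply: contraTneq hp => ->; rewrite mulr0 ltxx.
have cn0 : c g != 0 by apply: contraTneq hp => ->; rewrite mul0r ltxx.
split.
  split => [w|]; first by rewrite /query divr_ge0 // mulr_ge0 ?gv_ge0 ?t0.
  by rewrite /query -mulr_suml -/D divff.
move=> a; apply: eq_bigr => w _; congr (_ * _).
rewrite /posterior /query sE /gexp -/g -/D; field.
by rewrite cn0 Dn0.
Qed.
End Helpers.

Lemma exists_max (R : realType) (O : finType) (o0 : O) (f : O -> R) :
  exists o, forall o', f o' <= f o.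
Proof.
case: (@arg_maxP _ _ O o0 xpredT f isT) => o _ h; exists o => o'; exact: h.
Qed.

Lemma sumOI (R : realType) (f : 'I_1 -> R) : \sum_(s : 'I_1) f s = f ord0.
Proof. by rewrite big_ord1. Qed.

Unset Implicit Arguments. Set Strict Implicit.

Theorem mainTheorem5 :
  exists C1 C2 : nat,
  forall (R : realType) (Omega : finType) (eps : R),
  0 < eps -> eps <= 1 ->
  forall (I : finType) (theta : I -> Omega -> R) (F : I -> R),
  injective theta ->
  (forall i, is_distr (theta i)) ->
  is_distr F ->
  exists (N : nat) (alg : I -> forall T : eqType, seq T -> (Omega -> R)),
    (N%:R <= C1%:R * (#|Omega| ^ (#|Omega| ^ 2))%:R
                   / eps ^+ (#|Omega| ^ 2 + #|Omega|)) /\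
    forall (A : finType) (u : Omega -> A -> R),
    (forall w a, 0 <= u w a <= 1) ->
    forall br : (Omega -> R) -> A, is_BR_oracle u br ->
    let Aset := fun i : I => run_queries (alg i A) br N in
    exists (E : I -> Omega -> 'I_N -> R) (t : I -> R),
      (forall i, is_experiment (E i)) /\
      menu_IC (S := fun _ => 'I_N) u theta E t /\
      menu_IR (S := fun _ => 'I_N) u theta E t /\
      (forall i (s : 'I_N), 0 < sig_prob (theta i) (E i) s ->
         exists2 a : A, a \in Aset i &
           forall a' : A,
             \sum_(w : Omega) posterior (theta i) (E i) s w * u w a'
               <= \sum_(w : Omega) posterior (theta i) (E i) s w * u w a) /\
      (forall (S : I -> finType) (E' : forall i, Omega -> S i -> R) (t' : I -> R),
         (forall i, is_experiment (E' i)) ->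
         menu_IC (S := S) u theta E' t' -> menu_IR (S := S) u theta E' t' ->
         revenue F t' - C2%:R * Num.sqrt eps <= revenue F t).
Proof.
exists 3%N, 3%N.
move=> R Omega eps e0 e1 I theta F _ thD [F0 F1].
set n := #|Omega|.
set m := mm n eps.
have m0 : (0 < m)%N by [].
exists (NG Omega m).
pose g0 : G Omega m := [ffun _ => ord0].
pose gl := enum (G Omega m).
exists (fun i T h => query (theta i) (nth g0 gl (size h))).
split.
  by rewrite /NG card_ffun card_ord; apply: N_bound.
move=> A u u01 br brO Aset.
pose Rset : set R := fun r => exists (S : I -> finType) (E' : forall i, Omega -> S i -> R)
  (t' : I -> R), [/\ (forall i, is_experiment (E' i)), menu_IC (S := S) u theta E' t',
                     menu_IR (S := S) u theta E' t' & r = revenue F t'].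
have t_le1 : forall (S : I -> finType) (E' : forall i, Omega -> S i -> R) (t' : I -> R),
    (forall i, is_experiment (E' i)) -> menu_IR (S := S) u theta E' t' -> forall i, t' i <= 1.
  move=> S E' t' hE hIR i; have := hIR i; have := value_le1 u01 (hE i) (thD i).
  have := base_ge0 u (theta i); lra.
have rev_le1 : forall r, Rset r -> r <= 1.
  move=> r [S [E' [t' [hE _ hIR ->]]]]; rewrite -F1 /revenue; apply: ler_sum => i _.
  by rewrite -[X in _ <= X]mulr1 ler_wpM2l // (t_le1 _ _ _ hE hIR).
have hsup : has_sup Rset.
  split; last by exists 1 => r; exact: rev_le1.
  exists 0; exists (fun _ => 'I_1), (fun _ _ _ => 1), (fun _ => 0); split.
  - by move=> i; split => // w; rewrite sumOI.
  - by move=> i j.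
  - move=> i; rewrite subr0 /value sumOI /base_util /fmax le_eqVlt; apply/orP; left.
    by apply/eqP; apply: eq_bigr => a _; apply: eq_bigr => w _; rewrite mulr1.
  - by rewrite /revenue big1 // => i _; rewrite mulr0.
set eta := Num.sqrt eps.
have eta0 : 0 < eta by rewrite sqrtr_gt0.
have eta2 : eta * eta = eps by rewrite -expr2 sqr_sqrtr // ltW.
have [e Re he] := sup_adherent eta0 hsup.
case: Re => S' [E' [t' [hE' hIC' hIR' eE]]].
pose coefO (o : option I) : G Omega m -> R :=
  if o is Some j then cc m (E' j) else @c0 R Omega m.
pose priceO (o : option I) : R := if o is Some j then (1 - eta) * t' j else 0.
pose U i o := \sum_g coefO o g * Phi u (theta i) (gv g) - priceO o.
have coef0 : forall o g, 0 <= coefO o g.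
  by case=> [j|] g /=; [apply: cc_ge0; case: (hE' j) | rewrite /c0 ler0n].
have coefrow : forall o w, \sum_g coefO o g * gv g w = 1.
  case=> [j|] w /=; last by rewrite c0_sum gv_gone.
  by rewrite cc_row //; case: (hE' j).
have valE : forall k o, value u (theta k) (gexp (coefO o)) = \sum_g coefO o g * Phi u (theta k) (gv g).
  by move=> k o; rewrite value_gexp.
have [ch hch] := @fin_all_exists I (fun _ => option I)
  (fun i o => forall o', U i o' <= U i o) (fun i => @exists_max R _ None (U i)).
exists (fun i => gexp (coefO (ch i))), (fun i => priceO (ch i)).
split; [|split; [|split; [|split]]].
- by move=> i; apply: is_exp_gexp.
- by move=> i j; rewrite !valE; exact: hch.
- move=> i; rewrite valE; apply: le_trans (hch i None).
  by rewrite /U /= c0_val // subr0.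
- move=> i s hp.
  have [hq hpost] := own_signal u (coef0 (ch i)) (proj1 (thD i)) hp.
  exists (br (query (theta i) (enum_val s))); last first.
    by move=> a'; rewrite !hpost; exact: brO _ hq a'.
  have gin : enum_val s \in gl by rewrite mem_enum.
  rewrite -{1}(nth_index g0 gin).
  apply: (@rq_mem _ _ _ br (fun k => query (theta i) (nth g0 gl k))) => [h //|].
  by rewrite /NG cardE index_mem.
- have hd : n%:R / m%:R <= eps := mm_delta n e0.
  have key : forall i, t' i - 2 * eta <= priceO (ch i).
    move=> i; have hmax := hch i (Some i).
    have Hii := cc_value_ge u m0 (hE' i) (thD i).
    case hc: (ch i) => [j|]; rewrite hc /U /= in hmax; rewrite /=.
    + have Hij := cc_value_le u01 m0 (hE' j) (thD i).
      have IC := hIC' i j.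
      have tj1 := t_le1 _ _ _ hE' hIR' j.
      rewrite !mulrBl !mul1r in hmax.
      have k1 : eta * (- eta) <= eta * (t' j - t' i).
        rewrite mulrN eta2 mulrBr; move: hmax Hij IC Hii hd; rewrite -/n; lra.
      rewrite ler_pM2l // in k1.
      have k3 : eta * t' j <= eta by rewrite -[X in _ <= X]mulr1 ler_wpM2l // ltW.
      rewrite mulrBl mul1r; lra.
    + rewrite c0_val // subr0 in hmax.
      have IR := hIR' i.
      rewrite !mulrBl !mul1r in hmax.
      have k1 : eta * t' i <= eta * 0 by rewrite mulr0; move: hmax Hii IR; lra.
      rewrite ler_pM2l // in k1; lra.
  move=> S E'' t'' hE'' hIC'' hIR''.
  have Rs : Rset (revenue F t'') by exists S, E'', t''.
  have hs := sup_upper_bound hsup Rs.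
  have hsum : revenue F t' - 2 * eta <= revenue F (fun i => priceO (ch i)).
    have -> : revenue F t' - 2 * eta = \sum_i F i * (t' i - 2 * eta).
      by rewrite /revenue; under [RHS]eq_bigr do rewrite mulrBr; rewrite sumrB -mulr_suml F1 mul1r.
    by apply: ler_sum => i _; rewrite ler_wpM2l.
  move: hs he hsum; rewrite eE; lra.
Qed.
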